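(* For every real $x>0$, $$2^{x-1}<\sum_{i=0}^{\lfloor x\rfloor}\binom{x}{i}\le 2^x.$$
   Context: For real $x$ and integer $i\ge0$, $\binom{x}{i}=x(x-1)\cdots(x-i+1)/i!$. *)

(* Defs.v *)
From Stdlib Require Import Reals Lra Lia ZArith.
Open Scope R_scope.

Fixpoint falling (x : R) (i : nat) : R :=
  match i with
  | O => 1
  | S k => falling x k * (x - INR k)
  end.

Definition gbinom (x : R) (i : nat) : R := falling x i / INR (fact i).

(* Floor of a real as an integer: Int_part x = up x - 1 is the floor. *)
Definition floorZ (x : R) : Z := Int_part x.

(* Main.v *)
Require Import Defs.
From Stdlib Require Import Reals.
From Stdlib Require Import Lra Lia ZArith.
From Coquelicot Require Import Coquelicot.
Open Scope R_scope.

Lemma falling_S k x : falling x (S k) = x * falling (x-1) k.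
Proof.
  induction k as [|k IH]; simpl; [ring|].
  simpl in IH. rewrite IH. destruct k; simpl; ring.
Qed.

Lemma gbinom_0 x : gbinom x 0 = 1.
Proof. unfold gbinom; simpl; field. Qed.

Lemma gbinom_S x k : gbinom x (S k) * INR (S k) = x * gbinom (x-1) k.
Proof.
  unfold gbinom. rewrite falling_S. change (fact (S k)) with (S k * fact k)%nat.
  rewrite mult_INR. field. split; [apply INR_fact_neq_0|apply not_0_INR; lia].
Qed.

Lemma pascal x k : gbinom x (S k) = gbinom (x-1) (S k) + gbinom (x-1) k.
Proof.
  unfold gbinom. rewrite falling_S.
  change (falling (x-1) (S k)) with (falling (x-1) k * (x - 1 - INR k)).
  change (fact (S k)) with (S k * fact k)%nat.
  rewrite mult_INR, S_INR. field. split; [apply INR_fact_neq_0|].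
  pose proof (pos_INR k); lra.
Qed.

Lemma pascal_sum x m :
  sum_f_R0 (gbinom x) (S m) = sum_f_R0 (gbinom (x-1)) (S m) + sum_f_R0 (gbinom (x-1)) m.
Proof.
  induction m as [|m IH].
  - simpl. rewrite !gbinom_0, (pascal x 0), gbinom_0. ring.
  - change (sum_f_R0 (gbinom x) (S (S m))) with (sum_f_R0 (gbinom x) (S m) + gbinom x (S (S m))).
    rewrite IH, (pascal x (S m)). simpl. ring.
Qed.

Lemma falling_nonneg y k : INR k <= y + 1 -> 0 <= falling y k.
Proof.
  induction k as [|k IH]; intros H; [simpl; lra|].
  rewrite S_INR in H. simpl. apply Rmult_le_pos; [apply IH|]; lra.
Qed.

Lemma gbinom_nonneg y k : INR k <= y + 1 -> 0 <= gbinom y k.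
Proof.
  intros H. unfold gbinom. apply Rmult_le_pos; [now apply falling_nonneg|].
  apply Rlt_le, Rinv_0_lt_compat, lt_0_INR, lt_O_fact.
Qed.

Lemma lower n : forall x, INR n <= x < INR n + 1 ->
  Rpower 2 (x - 1) < sum_f_R0 (gbinom x) n.
Proof.
  induction n as [|n IH]; intros x Hx.
  - simpl in *. rewrite gbinom_0.
    replace 1 with (Rpower 2 0) at 2 by (apply Rpower_O; lra).
    apply Rpower_lt; lra.
  - rewrite S_INR in Hx. rewrite pascal_sum.
    change (sum_f_R0 (gbinom (x-1)) (S n)) with (sum_f_R0 (gbinom (x-1)) n + gbinom (x-1) (S n)).
    assert (0 <= gbinom (x-1) (S n)) by (apply gbinom_nonneg; rewrite S_INR; lra).
    assert (Rpower 2 (x - 1 - 1) < sum_f_R0 (gbinom (x-1)) n) by (apply IH; lra).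
    replace (x - 1) with ((x - 1 - 1) + 1) at 1 by ring.
    rewrite Rpower_plus, Rpower_1 by lra. lra.
Qed.

Lemma sum_at0 (c : nat -> R) m : sum_f_R0 (fun i => c i * 0 ^ i) m = c 0%nat.
Proof. induction m as [|m IH]; simpl; [ring|]. rewrite IH. ring. Qed.

Lemma deriv_poly (c : nat -> R) m y :
  is_derive (fun y => sum_f_R0 (fun i => c i * y ^ i) (S m)) y
    (sum_f_R0 (fun i => c (S i) * INR (S i) * y ^ i) m).
Proof.
  induction m as [|m IH].
  - simpl. eapply is_derive_ext.
    { intros t. reflexivity. }
    auto_derive; auto. ring.
  - eapply is_derive_ext.
    { intros t. symmetry. change (sum_f_R0 (fun i => c i * t ^ i) (S (S m))) with
        (sum_f_R0 (fun i => c i * t ^ i) (S m) + c (S (S m)) * t ^ (S (S m))). reflexivity. }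
    change (sum_f_R0 (fun i => c (S i) * INR (S i) * y ^ i) (S m)) with
      (sum_f_R0 (fun i => c (S i) * INR (S i) * y ^ i) m + c (S (S m)) * INR (S (S m)) * y ^ (S m)).
    apply (is_derive_plus (fun t => sum_f_R0 (fun i => c i * t ^ i) (S m)) (fun t => c (S (S m)) * t ^ S (S m))); [exact IH|].
    apply (is_derive_ext (fun t => c (S (S m)) * (t ^ (S (S m))))); [reflexivity|].
    replace (c (S (S m)) * INR (S (S m)) * y ^ S m) with
      (c (S (S m)) * (INR (S (S m)) * 1 * y ^ Init.Nat.pred (S (S m)))) by (simpl; ring).
    auto_derive; [auto|]. simpl; ring.
Qed.

Lemma rpow_deriv x y : -1 < y ->
  is_derive (fun t => Rpower (1 + t) x) y (x * Rpower (1 + y) (x - 1)).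
Proof.
  intros Hy. unfold Rpower. auto_derive; [lra|].
  replace (x * ln (1 + y)) with ((x - 1) * ln (1 + y) + ln (1 + y)) by ring.
  rewrite exp_plus, exp_ln by lra. field. lra.
Qed.

Lemma upper n : forall x, INR n <= x -> forall Y, 0 <= Y ->
  sum_f_R0 (fun i => gbinom x i * Y ^ i) n <= Rpower (1 + Y) x.
Proof.
  induction n as [|n IH]; intros x Hx Y HY.
  - simpl. rewrite gbinom_0. unfold Rpower.
    assert (0 <= ln (1 + Y)) by (rewrite <- ln_1; apply ln_le; lra).
    assert (0 <= x * ln (1 + Y)) by (simpl in Hx; apply Rmult_le_pos; lra).
    destruct (Rle_lt_or_eq_dec _ _ H0) as [h|h].
    + pose proof (exp_increasing _ _ h). rewrite exp_0 in H1. lra.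
    + rewrite <- h, exp_0. lra.
  - rewrite S_INR in Hx.
    set (D := fun t => Rpower (1 + t) x - sum_f_R0 (fun i => gbinom x i * t ^ i) (S n)).
    set (dD := fun t => x * (Rpower (1 + t) (x - 1) - sum_f_R0 (fun i => gbinom (x-1) i * t ^ i) n)).
    assert (Hd : forall t, -1 < t -> is_derive D t (dD t)).
    { intros t Ht. unfold D.
      replace (dD t) with (x * Rpower (1 + t) (x - 1) -
        sum_f_R0 (fun i => gbinom x (S i) * INR (S i) * t ^ i) n).
      2: { unfold dD. rewrite Rmult_minus_distr_l, scal_sum. f_equal.
           apply sum_eq. intros i _. rewrite gbinom_S. ring. }
      apply (is_derive_minus (fun t => Rpower (1 + t) x)
        (fun t => sum_f_R0 (fun i => gbinom x i * t ^ i) (S n))).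
      - now apply rpow_deriv.
      - apply (deriv_poly (gbinom x) n t). }
    destruct (MVT_gen D 0 Y dD) as [c [Hc Heq]].
    + intros t Ht. apply Hd. rewrite Rmin_left in Ht by lra. lra.
    + intros t Ht. rewrite Rmin_left, Rmax_right in Ht by lra.
      apply continuity_pt_filterlim. apply (ex_derive_continuous D).
      exists (dD t). apply Hd. lra.
    + rewrite Rmin_left, Rmax_right in Hc by lra.
      assert (HD0 : D 0 = 0).
      { unfold D. rewrite sum_at0, gbinom_0. unfold Rpower.
        rewrite Rplus_0_r, ln_1, Rmult_0_r, exp_0. ring. }
      assert (0 <= dD c).
      { unfold dD. apply Rmult_le_pos; [pose proof (pos_INR n); lra|].
        assert (sum_f_R0 (fun i => gbinom (x-1) i * c ^ i) n <= Rpower (1 + c) (x - 1))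
          by (apply IH; lra). lra. }
      assert (0 <= D Y) by (assert (0 <= dD c * (Y - 0)) by (apply Rmult_le_pos; lra); lra).
      unfold D in H0. lra.
Qed.

Theorem claimA2 (x : R) (hx : 0 < x) :
  Rpower 2 (x - 1) < sum_f_R0 (fun i => gbinom x i) (Z.to_nat (floorZ x))
  /\ sum_f_R0 (fun i => gbinom x i) (Z.to_nat (floorZ x)) <= Rpower 2 x.
Proof.
  destruct (base_Int_part x) as [h1 h2].
  assert (Hz : (0 <= Int_part x)%Z).
  { assert (IZR (-1) < IZR (Int_part x)) by lra.
    apply lt_IZR in H. lia. }
  set (n := Z.to_nat (floorZ x)).
  assert (Hn : INR n = IZR (Int_part x)).
  { unfold n, floorZ. rewrite INR_IZR_INZ, Z2Nat.id; auto. }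
  split.
  - apply lower. rewrite Hn. lra.
  - replace 2 with (1 + 1) by ring.
    rewrite (sum_eq _ (fun i => gbinom x i * 1 ^ i)).
    + apply upper; [rewrite Hn; lra | lra].
    + intros i _. rewrite pow1. ring.
Qed.
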